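(* Let $K=\mathbb{Q}(\rho)$ be a simplest cubic field, where $\rho$ is a root of $x^3-ax^2-(a+3)x-1$ with $a\in\mathbb{Z}_{\geq-1}$, and let $\Delta=a^2+3a+9$. Suppose $p^2\mid\Delta$ for a prime $p>3$. Then there are integers $1\leq k,l\leq p-1$ such that $\frac{k+l\rho+\rho^2}{p}\in\mathcal{O}_K$. *)

(* Defs.v *)
From mathcomp Require Import all_boot all_order all_algebra all_field.
Set Implicit Arguments. Unset Strict Implicit. Unset Printing Implicit Defensive.
Import Order.TTheory GRing.Theory Num.Theory.
Local Open Scope ring_scope.

Definition simplest_cubic (a : int) : {poly algC} :=
  'X^3 - (a%:~R) *: 'X^2 - ((a + 3)%:~R) *: 'X - 1.

Definition sc_Delta (a : int) : int := a ^+ 2 + 3 * a + 9.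

(* Main.v *)
Require Import Defs.
From mathcomp Require Import all_boot all_order all_algebra all_field.
From mathcomp Require Import ring lra zify.
Import Order.TTheory GRing.Theory Num.Theory.
Local Open Scope ring_scope.

Lemma cubic_Aint (x : algC) (e0 e1 e2 : int) :
  x^+3 + e2%:~R * x^+2 + e1%:~R * x + e0%:~R = 0 -> x \in Aint.
Proof.
move=> hx.
apply: (@root_monic_Aint (Poly [:: e0%:~R; e1%:~R; e2%:~R; 1])).
- rewrite /root horner_Poly /= mul0r add0r; apply/eqP; rewrite -[RHS]hx; ring.
- by rewrite monicE /lead_coef (@PolyK _ 1) //= oner_neq0.
- apply/polyOverP => i; rewrite coef_Poly.
  case: i => [|[|[|[|i]]]] /=; rewrite ?nth_nil ?rpred_int ?rpred0 ?rpred1 //.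
Qed.


Lemma exists_inv3 (p : nat) : prime p -> (3 < p)%N ->
  exists t : int, 3 * t = 2 * (p%:Z) ^+ 2 + 1.
Proof.
move=> pp p3.
have h3 : (p %% 3 != 0)%N.
  apply/negP => h; have : (3 %| p)%N by exact: h.
  by rewrite dvdn_prime2 // => /eqP e; move: p3; rewrite -e.
have hp := divn_eq p 3.
have hr : (p %% 3 < 3)%N by rewrite ltn_pmod.
set q := (p %/ 3)%N in hp; set r := (p %% 3)%N in hp h3 hr.
have hP : p%:Z = q%:Z * 3 + r%:Z by rewrite {1}hp PoszD PoszM.
clear hp; case: r hP h3 hr => [|[|[|r]]] //= hP _ _.
- exists (6 * q%:Z ^+ 2 + 4 * q%:Z + 1); rewrite hP; ring.
- exists (6 * q%:Z ^+ 2 + 8 * q%:Z + 3); rewrite hP; ring.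
Qed.

Lemma int_facts (a : int) (p : nat) (t d : int) :
  3 * t = 2 * (p%:Z) ^+ 2 + 1 -> sc_Delta a = d * (p%:Z) ^+ 2 ->
  let c := a * t in
  [/\ 3 * c - a = p%:Z ^+ 2 * (2 * a),
      3 * c ^+ 2 - 2 * a * c - (a + 3) =
        p%:Z ^+ 2 * (t * (p%:Z ^+ 2 * (2 * a) ^+ 2 - d) - 2 * (3 * c ^+ 2 - 2 * a * c - (a + 3))) &
      c ^+ 3 - a * c ^+ 2 - (a + 3) * c - 1 =
        p%:Z ^+ 2 * (t ^+ 3 * (- (2 * a + 3) * d - 3 * (2 * a) * d * p%:Z ^+ 2 + (2 * a) ^+ 3 * p%:Z ^+ 4)
         - (6 + 12 * p%:Z ^+ 2 + 8 * p%:Z ^+ 4) * (c ^+ 3 - a * c ^+ 2 - (a + 3) * c - 1))].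
Proof.
move=> ht hd c.
set P := p%:Z.
have h3c : 3 * c - a = P ^+ 2 * (2 * a).
  by rewrite /c mulrCA ht; ring.
have hD : sc_Delta a = a ^+ 2 + 3 * a + 9 by [].
split => //.
- set B := 3 * c ^+ 2 - 2 * a * c - (a + 3).
  have hB3 : 3 * B = P ^+ 2 * (P ^+ 2 * (2 * a) ^+ 2 - d).
    have -> : 3 * B = (3 * c - a) ^+ 2 - sc_Delta a by rewrite hD /B; ring.
    rewrite h3c hd; ring.
  transitivity (t * (3 * B) - P ^+ 2 * (2 * B)).
    have -> : t * (3 * B) = (3 * t) * B by ring.
    rewrite ht; ring.
  rewrite hB3; ring.
- set C := c ^+ 3 - a * c ^+ 2 - (a + 3) * c - 1.
  have hC27 : 27 * C = P ^+ 2 * (- (2 * a + 3) * d - 3 * (2 * a) * d * P ^+ 2 + (2 * a) ^+ 3 * P ^+ 4).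
    have -> : 27 * C = - (2 * a + 3) * sc_Delta a - 3 * (3 * c - a) * sc_Delta a + (3 * c - a) ^+ 3
      by rewrite hD /C; ring.
    rewrite h3c hd; ring.
  transitivity (t ^+ 3 * (27 * C) - ((3 * t) ^+ 3 - 1) * C); first ring.
  rewrite hC27 ht; ring.
Qed.

Theorem proposition4p2 (a : int) (p : nat) (rho : algC) :
  (-1 <= a) -> prime p -> (3 < p)%N ->
  (p%:Z ^+ 2 %| sc_Delta a)%Z ->
  root (simplest_cubic a) rho ->
  exists k l : nat, [/\ (1 <= k <= p.-1)%N, (1 <= l <= p.-1)%N &
    (k%:R + l%:R * rho + rho ^+ 2) / p%:R \in Aint].
Proof.
move=> _ pp p3 /dvdzP [d hd] hroot.
have [t ht] := exists_inv3 p pp p3.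
have [hA hB hC] := int_facts a p t d ht hd.
set P := p%:Z in hA hB hC ht hd.
set c := a * t in hA hB hC.
set A' := 2 * a in hA hB hC.
set B' := t * (P ^+ 2 * A' ^+ 2 - d) - _ in hB.
set C' := t ^+ 3 * _ - _ in hC.
have hf : rho ^+ 3 - a%:~R * rho ^+ 2 - (a + 3)%:~R * rho - 1 = 0.
  move: hroot; rewrite /root /simplest_cubic !hornerE => /eqP <-; ring.
have P0 : P != 0 by rewrite /P; case: (p) pp.
have p0 : (p%:R : algC) != 0 by rewrite pnatr_eq0; case: (p) pp.
have hPR : (P%:~R : algC) = p%:R by rewrite /P; ring.
have ndc : ~~ (P %| c)%Z.
  apply/negP => /dvdzP [e he].
  have h1 : 1 = P * (e ^+ 3 * P ^+ 2 - a * e ^+ 2 * P - (a + 3) * e - P * C').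
    transitivity (c ^+ 3 - a * c ^+ 2 - (a + 3) * c - (c ^+ 3 - a * c ^+ 2 - (a + 3) * c - 1)); first ring.
    rewrite [X in _ - X]hC he; ring.
  have : (P %| 1)%Z by apply/dvdzP; exists ((e ^+ 3 * P ^+ 2 - a * e ^+ 2 * P - (a + 3) * e - P * C')); rewrite mulrC.
  by rewrite dvdzE /= dvdn1 => /eqP e1; move: pp; rewrite e1.
pose beta := rho - c%:~R.
have hh : beta ^+ 3 + (P ^+ 2 * A')%:~R * beta ^+ 2 + (P ^+ 2 * B')%:~R * beta + (P ^+ 2 * C')%:~R = 0.
  rewrite -hA -hB -hC -hf /beta /A'; ring.
pose gam := beta ^+ 2 / p%:R.
have gamA : gam \in Aint.
  apply: (@cubic_Aint gam (- (P * C' ^+ 2)) (P ^+ 2 * B' ^+ 2 - 2 * P ^+ 2 * A' * C')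
     (- (P ^+ 3 * A' ^+ 2 - 2 * P * B'))).
  have : (p%:R : algC) ^+ 3 * (gam ^+ 3 + (- (P ^+ 3 * A' ^+ 2 - 2 * P * B'))%:~R * gam ^+ 2 +
    (P ^+ 2 * B' ^+ 2 - 2 * P ^+ 2 * A' * C')%:~R * gam + (- (P * C' ^+ 2))%:~R) = 0.
    transitivity ((beta ^+ 3 + (P ^+ 2 * A')%:~R * beta ^+ 2 + (P ^+ 2 * B')%:~R * beta + (P ^+ 2 * C')%:~R) *
       (beta ^+ 3 - (P ^+ 2 * A')%:~R * beta ^+ 2 + (P ^+ 2 * B')%:~R * beta - (P ^+ 2 * C')%:~R)); last first.
      by rewrite hh mul0r.
    rewrite /gam; rewrite -hPR; field; exact: p0.
  by move/eqP; rewrite mulf_eq0 expf_eq0 (negbTE p0) andbF /= => /eqP.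
have rhoA : rho \in Aint.
  apply: (@cubic_Aint rho (-1) (- (a + 3)) (- a)); rewrite -hf; ring.
have Ppos : 0 < P by rewrite /P ltz_nat prime_gt0.
pose k := `|(c ^+ 2 %% P)%Z|%N.
pose l := `|((- 2 * c) %% P)%Z|%N.
have hk : k%:Z = (c ^+ 2 %% P)%Z by rewrite /k abszE ger0_norm // modz_ge0.
have hl : l%:Z = ((- 2 * c) %% P)%Z by rewrite /l abszE ger0_norm // modz_ge0.
have kp : (k < p)%N by rewrite -ltz_nat hk ltz_pmod.
have lp : (l < p)%N by rewrite -ltz_nat hl ltz_pmod.
have k0 : k != 0%N.
  apply/eqP => k0; move: ndc; rewrite /k in k0.
  have : (P %| c ^+ 2)%Z.
    by apply/dvdz_mod0P; apply/eqP; rewrite -normr_eq0 -abszE k0.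
  rewrite !dvdzE abszX Euclid_dvdX // => /andP [->] //.
have l0 : l != 0%N.
  apply/eqP => l0; move: ndc; rewrite /l in l0.
  have : (P %| - 2 * c)%Z.
    by apply/dvdz_mod0P; apply/eqP; rewrite -normr_eq0 -abszE l0.
  rewrite !dvdzE abszM Euclid_dvdM // => /orP [h2 | ->] //.
  have := dvdn_leq _ h2; rewrite /= => /(_ isT) h; move: p3 h; rewrite /P /=; lia.
exists k, l; split.
- by rewrite lt0n k0 /= -ltnS prednK // prime_gt0.
- by rewrite lt0n l0 /= -ltnS prednK // prime_gt0.
have ek : (k%:R : algC) = (c ^+ 2 - (c ^+ 2 %/ P)%Z * P)%:~R.
  have -> : (k%:R : algC) = (k%:Z)%:~R by ring.
  by rewrite hk {2}(divz_eq (c ^+ 2) P) addrC addKr.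
have el : (l%:R : algC) = (- 2 * c - ((- 2 * c) %/ P)%Z * P)%:~R.
  have -> : (l%:R : algC) = (l%:Z)%:~R by ring.
  by rewrite hl {2}(divz_eq (- 2 * c) P) addrC addKr.
have -> : (k%:R + l%:R * rho + rho ^+ 2) / p%:R =
   gam - ((c ^+ 2 %/ P)%Z)%:~R - ((- 2 * c) %/ P)%Z%:~R * rho.
  rewrite ek el /gam /beta -hPR; field; exact: p0.
apply: rpredB; [apply: rpredB | apply: rpredM] => //; exact: Aint_int.
Qed.
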